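(* For every $n\ge 1$, the $\mathbb{Z}$-discriminating complexity of $\mathbb{Z}^n$ is asymptotically dominated by a polynomial of degree $n-1$, i.e. $C_{\mathbb{Z}^n}^{\mathbb{Z}} \preceq (R\mapsto R^{n-1})$.
   Context: A homomorphism $\phi: G \to H$ discriminates a finite set $S\subseteq G-\{1\}$ if $1\notin\phi(S)$. For finite generating sets $X$ of $G$, $Y$ of $H$, $|\phi|_X^Y := \max_{x\in X}|\phi(x)|_Y$, and $C_{G,X}^{H,Y}(R) := \min\{|\phi|_X^Y : \phi \text{ discriminates } B_R(G,X)-\{1\}\}$, with $B_R(G,X)$ the closed word-metric ball of radius $R$. For $f,g:\mathbb{N}\to\mathbb{N}$, $f\preceq g$ means there is $K$ with $f(R)\le Kg(KR)+K$ for all $R$; the $\preceq$-class of $C_{G,X}^{H,Y}$ is independent of $X,Y$ and denoted $C_G^H$. *)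

(* Defs.v *)
From HB Require Import structures.
From mathcomp Require Import all_boot all_order all_algebra.
Set Implicit Arguments. Unset Strict Implicit. Unset Printing Implicit Defensive.
Import Order.TTheory GRing.Theory Num.Theory.
Local Open Scope ring_scope.

(* Abelian groups are written additively (zmodType). *)

Definition is_hom (G H : zmodType) (phi : G -> H) : Prop :=
  forall x y : G, phi (x + y) = phi x + phi y.

Definition word_ball (G : zmodType) (X : seq G) (R : nat) (g : G) : Prop :=
  exists s : seq G,
    (size s <= R)%N /\ all (fun y => (y \in X) || (- y \in X)) s /\
    \sum_(y <- s) y = g.

Definition discriminates (G H : zmodType) (phi : G -> H) (S : G -> Prop) : Prop :=
  forall g, S g -> phi g <> 0.

(* |phi|_X^Y <= m, i.e. max_{x in X} |phi x|_Y <= m. *)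
Definition hom_norm_le (G H : zmodType) (X : seq G) (Y : seq H)
  (phi : G -> H) (m : nat) : Prop :=
  forall x, x \in X -> word_ball Y m (phi x).

(* C_{G,X}^{H,Y}(R) <= m : some homomorphism discriminating B_R(G,X) - {1}
   has |phi|_X^Y <= m (the minimum exists and is at most m). *)
Definition complexity_le (G H : zmodType) (X : seq G) (Y : seq H)
  (R m : nat) : Prop :=
  exists phi : G -> H, is_hom phi /\
    discriminates phi (fun g => word_ball X R g /\ g <> 0) /\
    hom_norm_le X Y phi m.

Definition complexity_preceq (G H : zmodType) (X : seq G) (Y : seq H)
  (f : nat -> nat) : Prop :=
  exists K : nat, forall R : nat, complexity_le X Y R (K * f (K * R) + K)%N.

(* Z^n as row vectors of integers, with its standard generating set. *)
Definition std_basis (n : nat) : seq 'rV[int]_n :=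
  [seq delta_mx 0 i | i <- enum 'I_n].

(* Main.v *)
Require Import Defs.
From HB Require Import structures.
From mathcomp Require Import all_boot all_order all_algebra.
From mathcomp Require Import zify.
Import Order.TTheory GRing.Theory Num.Theory.
Local Open Scope ring_scope.

Lemma digits0 (R k : nat) (f : nat -> int) :
  (forall i, (i < k)%N -> `|f i| <= R%:Z) ->
  \sum_(i < k) f i * (R.+1%:Z) ^+ i = 0 -> forall i, (i < k)%N -> f i = 0.
Proof.
elim: k f => [|k IH] f hb hs i hi; first by [].
move: hs; rewrite big_ord_recl /= expr0 mulr1.
have -> : \sum_(i0 < k) f (bump 0 i0) * (R.+1%:Z) ^+ bump 0 i0
   = R.+1%:Z * \sum_(i0 < k) f i0.+1 * (R.+1%:Z) ^+ i0.
  rewrite mulr_sumr; apply: eq_bigr => j _.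
  by rewrite /bump /= add1n exprS mulrCA.
move=> hs.
have h0 := hb 0%N isT.
have hS : \sum_(i0 < k) f i0.+1 * (R.+1%:Z) ^+ i0 = 0.
  move: h0 hs; set S := \sum_(_ < _) _.
  rewrite ler_norml => /andP[h1 h2] h. nia.
have hf0 : f 0%N = 0 by move: hs; rewrite hS mulr0 addr0.
case: i hi => [|i] hi //.
by apply: (IH (fun j => f j.+1)) => // j hj; apply: hb.
Qed.

Lemma coord_bound (n : nat) (s : seq 'rV[int]_n) :
  all (fun y => (y \in std_basis n) || (- y \in std_basis n)) s ->
  forall i, `|(\sum_(y <- s) y) 0 i| <= (size s)%:R.
Proof.
elim: s => [|y s IH] /= hall i.
  by rewrite big_nil mxE normr0.
move/andP: hall => [hy hall].
rewrite big_cons mxE.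
apply: (le_trans (ler_normD _ _)).
rewrite -[(size s).+1]add1n natrD; apply: lerD; last exact: (IH hall i).
have hd : forall z : 'rV[int]_n, z \in std_basis n -> `|z 0 i| <= 1.
  move=> z /mapP [j _ ->]; rewrite mxE.
  by case: (_ && _); rewrite ?normr1 ?normr0.
case/orP: hy => hy; first exact: hd.
have := hd _ hy; by rewrite mxE normrN.
Qed.

Lemma sum_nseq1 (k : nat) : \sum_(y <- nseq k (1 : int)) y = k%:R.
Proof.
elim: k => [|k IH]; first by rewrite big_nil.
by rewrite /= big_cons IH -addn1 natrD addrC.
Qed.

Theorem mainTheorem8 (n : nat) (hn : (1 <= n)%N) :
  complexity_preceq (std_basis n) [:: (1 : int)] (fun R : nat => (R ^ (n - 1))%N).
Proof.
case: n hn => [//|n] _.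
exists 2%N => R.
pose M : int := R.+1%:Z.
exists (fun g : 'rV[int]_n.+1 => \sum_(i < n.+1) g 0 i * M ^+ i).
split; [|split].
- move=> x y; rewrite -big_split; apply: eq_bigr => i _.
  by rewrite mxE mulrDl.
- move=> g [[s [hsz [hall hsum]]] gne0] hphi.
  apply: gne0; apply/matrixP => a j; rewrite (ord1 a) mxE.
  have := @digits0 R n.+1 (fun m => g 0 (inord m)).
  rewrite -(inord_val j); apply => //.
  + move=> m _; rewrite -hsum.
    have h1 := @coord_bound _ _ hall (inord m). apply: (le_trans h1).
    by rewrite natz lez_nat.
  + rewrite -[RHS]hphi; apply: eq_bigr => m _; by rewrite inord_val.
- move=> x /mapP [i _ ->].
  rewrite /word_ball.
  exists (nseq ((R.+1) ^ i) 1); split; [|split].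
  + rewrite size_nseq.
    apply: (@leq_trans ((R.+1) ^ n)).
      apply: leq_pexp2l => //. have := ltn_ord i. lia.
    case: R M => [|R'] _; first by rewrite exp1n addn2.
    rewrite subn1 /=.
    apply: (@leq_trans ((2 * R'.+1) ^ n)).
      case: (posnP n) => [->|hn]; first by [].
      rewrite leq_exp2r //. lia.
    set t := (_ ^ _)%N. lia.
  + apply/allP => y /nseqP [-> _]; by rewrite inE eqxx.
  + transitivity (((R.+1) ^ i)%:R : int); first exact: sum_nseq1.
    rewrite (bigD1 i) //= big1 ?addr0.
      by rewrite !mxE !eqxx /= mul1r /M natrX natz.
    move=> j hj. by rewrite !mxE eqxx /= (negbTE hj) mul0r.
Qed.
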